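(* Let $Q(z)$ be a $k\times k$ Hermite matrix of Laurent polynomials with $Q_{1,1}(z)\not\equiv0$ and $$\operatorname{len}(Q_{1,1})\le\operatorname{len}(Q_{2,2})\le\dots\le\operatorname{len}(Q_{k,k}).$$ Suppose $0\le s<k$ and $Q$ is diagonally dominant at each of its diagonal entries $1,\dots,s$ (no condition if $s=0$). Then there exists a $k\times k$ unimodular matrix $U(z)$ of Laurent polynomials such that $\widetilde Q(z):=U(z)Q(z)U^\star(z)$ is diagonally dominant at each of its diagonal entries $1,\dots,s+1$, and the top-left $(s+1)\times(s+1)$ submatrix of $\widetilde Q$ equals that of $Q$.
   Context: For a matrix $U(z)=\sum_k U_k z^k$ of Laurent polynomials, $U^\star(z):=\sum_k\overline{U_k}^T z^{-k}$; Hermite means $A^\star=A$. A square matrix of Laurent polynomials is unimodular if its determinant is a nonzero monomial $cz^m$ ($c\neq0$). For a Laurent polynomial $u\not\equiv0$: $\deg(u)$ is its highest degree, $\operatorname{ldeg}(u)$ its lowest degree, $\operatorname{len}(u):=\deg(u)-\operatorname{ldeg}(u)$, and $\operatorname{fs}(u):=[\operatorname{ldeg}(u),\deg(u)]$ (an integer interval); for $u\equiv0$, $\operatorname{len}(u):=-\infty$, $\deg(u):=-\infty$ and $\operatorname{fs}(u):=\emptyset$. A $k\times k$ matrix $Q(z)$ of Laurent polynomials is diagonally dominant at the diagonal entry $s$ if (1) for all $i\ne s$: $\operatorname{fs}(Q_{i,s})\subsetneq\operatorname{fs}(Q_{s,s})$ and $\operatorname{fs}(Q_{s,i})\subsetneq\operatorname{fs}(Q_{s,s})$;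 and (2) for all $i>s$: $\deg(Q_{s,i})<\deg(Q_{s,s})$. $Q$ is diagonally dominant if it is diagonally dominant at every diagonal entry. *)

(* Defs.v *)
(* Laurent polynomials over C (any numClosedFieldType, e.g. the
   complex numbers) are represented inside the fraction field of {poly C}
   as elements of the form p(z) * z^a (p a polynomial, a an integer). *)
From HB Require Import structures.
From mathcomp Require Import all_boot all_order all_algebra.
Set Implicit Arguments. Unset Strict Implicit. Unset Printing Implicit Defensive.
Import Order.TTheory GRing.Theory Num.Theory.
Local Open Scope ring_scope.

Section Laurent.
Variable C : numClosedFieldType.

Definition LF := {fraction {poly C}}.
Definition toLF (p : {poly C}) : LF := FracField.tofrac p.

Definition Xf : LF := toLF 'X.

Definition lp (p : {poly C}) (a : int) : LF := toLF p * Xf ^ a.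

(* its star: conj(p)(z^-1) * z^-a, i.e. sum_j conj(c_j) z^-j if p z^a = sum_j c_j z^j *)
Definition lpstar (p : {poly C}) (a : int) : LF :=
  (map_poly (fun c => toLF (Num.conj c)%:P) p).[Xf^-1] * Xf ^ (- a).

Definition lstar (f g : LF) : Prop := exists p a, f = lp p a /\ g = lpstar p a.

Definition mxstar k (A B : 'M[LF]_k) : Prop := forall i j, lstar (A j i) (B i j).

Definition hermite k (A : 'M[LF]_k) : Prop := mxstar A A.

Definition unimodular k (U : 'M[LF]_k) : Prop :=
  exists (c : C) (m : int), c != 0 /\ \det U = toLF c%:P * Xf ^ m.

(* fs(f) = [a, b]: f = sum_{j=a}^b c_j z^j with c_a <> 0 and c_b <> 0 *)
Definition fs_is (f : LF) (a b : int) : Prop :=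
  exists p : {poly C}, [/\ p`_0 != 0, (size p)%:Z = b - a + 1 & f = lp p a].

(* j \in fs(f)   (fs(0) is empty) *)
Definition in_fs (f : LF) (j : int) : Prop := exists a b, fs_is f a b /\ a <= j <= b.

Definition fs_ssub (u v : LF) : Prop :=
  (forall j, in_fs u j -> in_fs v j) /\ exists j, in_fs v j /\ ~ in_fs u j.

Definition deg_is (f : LF) (n : int) : Prop := exists a, fs_is f a n.

(* deg(u) < deg(v), with deg(0) = -oo *)
Definition deg_lt (u v : LF) : Prop :=
  exists n, deg_is v n /\ (u = 0 \/ exists m, deg_is u m /\ m < n).

Definition len_is (f : LF) (l : int) : Prop := exists a b, fs_is f a b /\ l = b - a.

(* len(u) <= len(v), with len(0) = -oo *)
Definition len_le (u v : LF) : Prop :=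
  u = 0 \/ exists l m, [/\ len_is u l, len_is v m & l <= m].

Definition diag_dom_at k (Q : 'M[LF]_k) (d : 'I_k) : Prop :=
  (forall i : 'I_k, i != d -> fs_ssub (Q i d) (Q d d) /\ fs_ssub (Q d i) (Q d d)) /\
  (forall i : 'I_k, (d < i)%N -> deg_lt (Q d i) (Q d d)).

End Laurent.

(* Main.v *)
Require Import Defs.
From HB Require Import structures.
From mathcomp Require Import all_boot all_order all_algebra.
From mathcomp Require Import zify.
From Stdlib Require Import ClassicalEpsilon.
Import Order.TTheory GRing.Theory Num.Theory.
Local Open Scope ring_scope.
Set Implicit Arguments. Unset Strict Implicit. Unset Printing Implicit Defensive.

Section Laur.
Variable C : numClosedFieldType.
Local Notation L := (LF C).
Local Notation toLF := (@toLF C).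
Local Notation Xf := (@Xf C).
Local Notation lp := (@lp C).
Local Notation lpstar := (@lpstar C).

Definition phi := ((@FracField.tofrac _) \o polyC \o (@Num.conj C))%FUN.

Lemma toLF_inj : injective toLF.
Proof. by move=> p q /eqP; rewrite /toLF tofrac_eq => /eqP. Qed.

Lemma Xf_neq0 : Xf != 0.
Proof. by rewrite /Xf /toLF tofrac_eq0 polyX_eq0. Qed.

Lemma toLF_Xn n : toLF ('X^n) = Xf ^ (n%:Z).
Proof. by rewrite /toLF /Xf rmorphXn /= -exprnP. Qed.

Lemma toLFM p q : toLF (p * q) = toLF p * toLF q.
Proof. exact: rmorphM. Qed.

Lemma lpD p q a : lp (p + q) a = lp p a + lp q a.
Proof. by rewrite /lp /toLF rmorphD mulrDl. Qed.

Lemma lpN p a : lp (- p) a = - lp p a.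
Proof. by rewrite /lp /toLF rmorphN mulNr. Qed.

Lemma lpM p q a b : lp p a * lp q b = lp (p * q) (a + b).
Proof.
by rewrite /lp /toLF rmorphM expfzDr ?Xf_neq0 // mulrACA.
Qed.

Lemma lp0 a : lp 0 a = 0.
Proof. by rewrite /lp /toLF rmorph0 mul0r. Qed.

Lemma lp_shift p a (n : nat) : lp (p * 'X^n) (a - n%:Z) = lp p a.
Proof.
rewrite /lp toLFM toLF_Xn -mulrA -expfzDr ?Xf_neq0 //.
by congr (_ * (_ ^ _)); lia.
Qed.

Lemma lp_shiftz p a m : m <= a -> lp p a = lp (p * 'X^(absz (a - m))) m.
Proof.
move=> ma; rewrite -{1}(lp_shift p a (absz (a - m))); congr lp.
have -> : ((absz (a - m))%:Z) = a - m by rewrite gez0_abs // subr_ge0.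
lia.
Qed.

Lemma lp_eq p q a b : lp p a = lp q b -> b <= a -> q = p * 'X^(absz (a - b)).
Proof.
move=> e ba; move: e; rewrite (lp_shiftz p ba) /lp => /(congr1 (fun x => x / Xf ^ b)).
rewrite !mulfK ?expfz_neq0 ?Xf_neq0 // => /toLF_inj ->//.
Qed.

Definition cf (p : {poly C}) (a j : int) : C := if a <= j then p`_(absz (j - a)) else 0.

Lemma cf_shift p a (n : nat) j : cf (p * 'X^n) (a - n%:Z) j = cf p a j.
Proof.
rewrite /cf coefMXn.
case: (lerP a j) => h1.
  have -> : (a - n%:Z <= j)%R by lia.
  have -> : (absz (j - (a - n%:Z))%R < n)%N = false by lia.
  congr (p`_ _); lia.
case: ifP => // h2; have -> : (absz (j - (a - n%:Z))%R < n)%N = true by lia.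
done.
Qed.

Lemma cf_shiftz p a m j : m <= a -> cf p a j = cf (p * 'X^(absz (a - m))) m j.
Proof.
move=> ma; rewrite -(cf_shift p a (absz (a - m))); congr cf.
have -> : ((absz (a - m))%:Z) = a - m by rewrite gez0_abs // subr_ge0.
lia.
Qed.

Lemma cf_eq p q a b : lp p a = lp q b -> cf p a =1 cf q b.
Proof.
wlog ba : p q a b / b <= a.
  move=> W e j; case: (lerP b a) => h; first exact: W.
  by symmetry; apply: W => //; apply: ltW.
move=> e j; rewrite (lp_eq e ba) -cf_shiftz //.
Qed.

Definition isL (f : L) := exists p a, f = lp p a.

Definition rep (f : L) : {poly C} * int :=
  epsilon (inhabits (0, 0)) (fun pa => f = lp pa.1 pa.2).

Lemma rep_spec f : isL f -> f = lp (rep f).1 (rep f).2.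
Proof.
move=> [p [a e]]; rewrite /rep.
exact: (epsilon_spec (inhabits (0,0)) (fun pa => f = lp pa.1 pa.2) (ex_intro _ (p, a) e)).
Qed.

Definition lcoef (f : L) (j : int) : C := cf (rep f).1 (rep f).2 j.

Lemma lcoef_lp p a j : lcoef (lp p a) j = cf p a j.
Proof.
have h : isL (lp p a) by exists p, a.
by rewrite /lcoef; apply: cf_eq; rewrite -rep_spec.
Qed.

Definition st (f : L) : L := lpstar (rep f).1 (rep f).2.

Lemma lpstar_phi p a : lpstar p a = (map_poly phi p).[Xf^-1] * Xf ^ (- a).
Proof. by []. Qed.

Lemma lpstar_eq p q a b : lp p a = lp q b -> lpstar p a = lpstar q b.
Proof.
wlog ba : p q a b / b <= a.
  move=> W e; case: (lerP b a) => h; first exact: W.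
  by symmetry; apply: W => //; apply: ltW.
move=> e; rewrite (lp_eq e ba) !lpstar_phi rmorphM /= map_polyXn hornerM hornerXn.
rewrite -mulrA; congr (_ * _).
rewrite exprnP exprz_inv -expfzDr ?Xf_neq0 //; congr (_ ^ _).
have -> : ((absz (a - b))%:Z) = a - b by rewrite gez0_abs // subr_ge0.
lia.
Qed.

Lemma st_lp p a : st (lp p a) = lpstar p a.
Proof.
have h : isL (lp p a) by exists p, a.
by rewrite /st; apply: lpstar_eq; rewrite -rep_spec.
Qed.


Lemma isL_lp p a : isL (lp p a). Proof. by exists p, a. Qed.

Lemma lp_1 : lp 1 0 = 1.
Proof. by rewrite /lp /toLF rmorph1 expr0z mulr1. Qed.

Lemma isL0 : isL 0. Proof. by exists 0, 0; rewrite lp0. Qed.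
Lemma isL1 : isL 1. Proof. by exists 1, 0; rewrite lp_1. Qed.

Lemma common f g : isL f -> isL g -> exists p q m, f = lp p m /\ g = lp q m.
Proof.
move=> [p [a ->]] [q [b ->]]; case: (lerP a b) => h.
  by exists p, (q * 'X^(absz (b - a))), a; split => //; apply: lp_shiftz.
by exists (p * 'X^(absz (a - b))), q, b; split => //; apply: lp_shiftz; apply: ltW.
Qed.

Lemma isLD f g : isL f -> isL g -> isL (f + g).
Proof. by move=> hf hg; have [p [q [m [-> ->]]]] := common hf hg; rewrite -lpD; apply: isL_lp. Qed.

Lemma isLN f : isL f -> isL (- f).
Proof. by move=> [p [a ->]]; rewrite -lpN; apply: isL_lp. Qed.

Lemma isLB f g : isL f -> isL g -> isL (f - g).
Proof. by move=> hf hg; apply: isLD => //; apply: isLN. Qed.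

Lemma isLM f g : isL f -> isL g -> isL (f * g).
Proof. by move=> [p [a ->]] [q [b ->]]; rewrite lpM; apply: isL_lp. Qed.

Lemma isL_sum (I : Type) (r : seq I) (P : pred I) (F : I -> L) :
  (forall i, P i -> isL (F i)) -> isL (\sum_(i <- r | P i) F i).
Proof. by move=> h; apply: big_ind => //; [exact: isL0 | exact: isLD]. Qed.

Lemma lcoefD f g j : isL f -> isL g -> lcoef (f + g) j = lcoef f j + lcoef g j.
Proof.
move=> hf hg; have [p [q [m [-> ->]]]] := common hf hg.
by rewrite -lpD !lcoef_lp /cf coefD; case: ifP; rewrite ?addr0.
Qed.

Lemma lcoefN f j : isL f -> lcoef (- f) j = - lcoef f j.
Proof.
by move=> [p [a ->]]; rewrite -lpN !lcoef_lp /cf coefN; case: ifP; rewrite ?oppr0.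
Qed.

Lemma lcoefB f g j : isL f -> isL g -> lcoef (f - g) j = lcoef f j - lcoef g j.
Proof. by move=> hf hg; rewrite lcoefD ?lcoefN //; apply: isLN. Qed.

Lemma lcoef0 j : lcoef 0 j = 0.
Proof. by rewrite -(lp0 0) lcoef_lp /cf coef0; case: ifP. Qed.

Lemma lcoef_sum (I : Type) (r : seq I) (P : pred I) (F : I -> L) j :
  (forall i, P i -> isL (F i)) ->
  lcoef (\sum_(i <- r | P i) F i) j = \sum_(i <- r | P i) lcoef (F i) j.
Proof.
move=> h.
pose K := fun (x : L) (y : C) => isL x /\ lcoef x j = y.
suff [] : K (\sum_(i <- r | P i) F i) (\sum_(i <- r | P i) lcoef (F i) j) by [].
apply: (big_ind2 K); first by split; [exact: isL0 | exact: lcoef0].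
  by move=> x1 x2 y1 y2 [h1 e1] [h2 e2]; split; [apply: isLD | rewrite lcoefD // e1 e2].
by move=> i Pi; split; [apply: h|].
Qed.

Definition mono (c : C) (e : int) : L := lp c%:P e.

Lemma isL_mono c e : isL (mono c e). Proof. exact: isL_lp. Qed.

Lemma lcoef_mono c e j : lcoef (mono c e) j = if j == e then c else 0.
Proof.
rewrite /mono lcoef_lp /cf coefC.
case: (lerP e j) => h.
  have -> : (absz (j - e) == 0%N) = (j == e) by apply/idP/idP => /eqP H; apply/eqP; lia.
  done.
by have -> : (j == e) = false by apply/eqP; lia.
Qed.

Lemma lcoef_monoM c e f j : isL f -> lcoef (mono c e * f) j = c * lcoef f (j - e).
Proof.
move=> [p [a ->]]; rewrite /mono lpM !lcoef_lp /cf coefCM.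
have -> : (e + a <= j) = (a <= j - e) by apply/idP/idP => H; lia.
case: ifP => h; last by rewrite mulr0.
by congr (_ * p`_ _); lia.
Qed.

Lemma lpstar_sum p a : lpstar p a =
  \sum_(i < size p) mono (Num.conj p`_i) (- (i%:Z) - a).
Proof.
rewrite lpstar_phi (horner_coef_wide _ (leqnn (size (map_poly phi p)))) mulr_suml.
rewrite size_map_poly; apply: eq_bigr => i _.
rewrite coef_map /= exprnP exprz_inv /mono /lp -mulrA -expfzDr ?Xf_neq0 //.
Qed.

Lemma isL_st f : isL f -> isL (st f).
Proof.
move=> [p [a ->]]; rewrite st_lp lpstar_sum; apply: isL_sum => *; exact: isL_mono.
Qed.

Lemma sum_single n (g : nat -> C) (m : int) :
  \sum_(i < n) (if m == i%:Z then g i else 0) =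
  if (0 <= m) && (absz m < n)%N then g (absz m) else 0.
Proof.
case: ifP => [/andP [h1 h2] | h].
  rewrite (bigD1 (Ordinal h2)) //= big1 ?addr0.
    by rewrite gez0_abs // eqxx.
  move=> i /eqP ne; case: ifP => // /eqP e; exfalso; apply: ne; apply: val_inj => /=; lia.
rewrite big1 // => i _; case: ifP => // /eqP e; exfalso.
move: h; rewrite e /= ltn_ord /=; by [].
Qed.

Lemma lcoef_st f j : isL f -> lcoef (st f) j = Num.conj (lcoef f (- j)).
Proof.
move=> [p [a ->]]; rewrite st_lp lpstar_sum lcoef_sum; last by move=> *; apply: isL_mono.
under eq_bigr => i _ do rewrite lcoef_mono.
have -> : \sum_(i < size p) (if j == - (i%:Z) - a then Num.conj p`_i else 0) =
  \sum_(i < size p) (if (- j - a) == i%:Z then Num.conj p`_i else 0).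
  apply: eq_bigr => i _; congr (if _ then _ else _); apply/eqP/eqP; lia.
rewrite (sum_single (size p) (fun i => Num.conj p`_i)) lcoef_lp /cf.
have -> : (a <= - j) = (0 <= - j - a) by apply/idP/idP; lia.
case: (lerP 0 (- j - a)) => h /=; last by rewrite conjC0.
case: ifP => h2 //; rewrite nth_default ?conjC0 //; lia.
Qed.

Lemma stM f g : isL f -> isL g -> st (f * g) = st f * st g.
Proof.
move=> [p [a ->]] [q [b ->]]; rewrite lpM !st_lp !lpstar_phi rmorphM hornerM.
by rewrite opprD expfzDr ?Xf_neq0 // mulrACA.
Qed.

Lemma stD f g : isL f -> isL g -> st (f + g) = st f + st g.
Proof.
move=> hf hg; have [p [q [m [-> ->]]]] := common hf hg.
by rewrite -lpD !st_lp !lpstar_phi rmorphD hornerD mulrDl.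
Qed.

Lemma stN f : isL f -> st (- f) = - st f.
Proof.
by move=> [p [a ->]]; rewrite -lpN !st_lp !lpstar_phi rmorphN hornerN mulNr.
Qed.

Lemma stB f g : isL f -> isL g -> st (f - g) = st f - st g.
Proof. by move=> hf hg; rewrite stD ?stN //; apply: isLN. Qed.

Lemma st0 : st 0 = 0.
Proof. by rewrite -{1}(lp0 0) st_lp lpstar_phi rmorph0 horner0 mul0r. Qed.

Lemma st1 : st 1 = 1.
Proof. rewrite -{1}lp_1 st_lp lpstar_phi map_polyC /= hornerC oppr0 expr0z mulr1 /phi /= conjC1 rmorph1 /=. exact: rmorph1. Qed.

Lemma st_sum (I : Type) (r : seq I) (P : pred I) (F : I -> L) :
  (forall i, P i -> isL (F i)) ->
  st (\sum_(i <- r | P i) F i) = \sum_(i <- r | P i) st (F i).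
Proof.
move=> h.
pose K := fun (x : L) (y : L) => isL x /\ st x = y.
suff [] : K (\sum_(i <- r | P i) F i) (\sum_(i <- r | P i) st (F i)) by [].
apply: (big_ind2 K); first by split; [exact: isL0 | exact: st0].
  by move=> x1 x2 y1 y2 [h1 e1] [h2 e2]; split; [apply: isLD | rewrite stD // e1 e2].
by move=> i Pi; split; [apply: h|].
Qed.

Lemma lstar_st f : isL f -> lstar f (st f).
Proof. by move=> [p [a ->]]; exists p, a; rewrite st_lp. Qed.

Lemma lstar_eq f g : lstar f g -> isL f /\ g = st f.
Proof. by move=> [p [a [-> ->]]]; rewrite st_lp; split => //; apply: isL_lp. Qed.


Lemma absz_ge (n : nat) (z : int) : n%:Z <= z -> (n <= absz z)%N.
Proof. by case: z => // m; rewrite lez_nat. Qed.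

Lemma lp_eq0 p a : (lp p a == 0) = (p == 0).
Proof.
rewrite /lp mulf_eq0 (negbTE (expfz_neq0 _ Xf_neq0)) orbF /toLF tofrac_eq0 //.
Qed.

Lemma fs_coef (f : L) a b : fs_is f a b ->
  [/\ isL f, a <= b, lcoef f a != 0, lcoef f b != 0 &
      forall x, (x < a) || (b < x) -> lcoef f x = 0].
Proof.
move=> [p [p0 sz ->]].
have pn0 : p != 0 by apply: contraNneq p0 => ->; rewrite coef0.
have szp : (0 < size p)%N by rewrite size_poly_gt0.
split; first exact: isL_lp.
- lia.
- by rewrite lcoef_lp /cf lexx subrr.
- rewrite lcoef_lp /cf.
  have -> : a <= b by lia.
  have -> : absz (b - a) = (size p).-1 by lia.
  by rewrite -lead_coefE lead_coef_eq0.
move=> x /orP [] h; rewrite lcoef_lp /cf.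
  by have -> : (a <= x) = false by lia.
have -> : a <= x by lia.
have h4 : ((size p)%:Z <= x - a) by lia.
by rewrite nth_default //; apply: absz_ge. Qed.
Lemma fs_uniq (f : L) a b a' b' : fs_is f a b -> fs_is f a' b' -> a = a' /\ b = b'.
Proof.
move=> h1 h2; have [_ l1 ca cb z] := fs_coef h1; have [_ l2 ca' cb' z'] := fs_coef h2.
have e1 : a <= a'.
  by case: (lerP a a') => // h; move: ca'; rewrite z ?eqxx // h.
have e2 : a' <= a.
  by case: (lerP a' a) => // h; move: ca; rewrite z' ?eqxx // h.
have e3 : b <= b'.
  by case: (lerP b b') => // h; move: cb; rewrite z' ?eqxx // h orbT.
have e4 : b' <= b.
  by case: (lerP b' b) => // h; move: cb'; rewrite z ?eqxx // h orbT.
split; lia.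
Qed.

Lemma factorX (p : {poly C}) : p != 0 -> exists (q : {poly C}) (m : nat), q`_0 != 0 /\ p = q * 'X^m.
Proof.
move=> pn0; have [m [q qr ep]] := multiplicity_XsubC p 0.
move: qr; rewrite pn0 /= => qr.
exists q, m; split; first by move: qr; rewrite /root horner_coef0.
by move: ep; rewrite polyC0 subr0.
Qed.

Lemma nz_fs f : isL f -> f != 0 -> exists a b, fs_is f a b.
Proof.
move=> [p [a ->]]; rewrite lp_eq0 => pn0.
have [q [m [q0 ep]]] := factorX pn0.
exists (a + m%:Z), (a + m%:Z + (size q)%:Z - 1).
exists q; split => //; first lia.
subst p; have H := lp_shift q (a + m%:Z) m; rewrite addrK in H; exact: H.
Qed.

Lemma lcoef_bound f : isL f -> exists N : nat, forall x,
  (N%:Z < x) || (x < - N%:Z) -> lcoef f x = 0.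
Proof.
move=> [p [a ->]]; exists (absz a + size p)%N => x /orP [] h; rewrite lcoef_lp /cf.
  have h4 : ((size p)%:Z <= x - a) by lia.
  by case: ifP => // _; rewrite nth_default //; apply: absz_ge.
by have -> : (a <= x) = false by lia.
Qed.

Lemma fs_ssub_coef (u v : L) a b : isL u -> fs_ssub u v -> fs_is v a b ->
  forall x, (x < a) || (b < x) -> lcoef u x = 0.
Proof.
move=> hu [sub _] hv x hx.
have [->|nz] := eqVneq u 0; first exact: lcoef0.
have [a' [b' hf]] := nz_fs hu nz.
have [_ l1 _ _ z] := fs_coef hf.
have [a2 [b2 [h2 r2]]] : in_fs v a' by apply: sub; exists a', b'; split => //; lia.
have [a3 [b3 [h3 r3]]] : in_fs v b' by apply: sub; exists a', b'; split => //; lia.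
have [e1 e2] := fs_uniq hv h2; have [e3 e4] := fs_uniq hv h3.
by apply: z; lia.
Qed.

Lemma deg_lt_coef (u v : L) a b : deg_lt u v -> fs_is v a b ->
  forall x, b <= x -> lcoef u x = 0.
Proof.
move=> [n [[a' hn] [->|[m [[a2 hm] lt]]]]] hv x hx; first exact: lcoef0.
have [_ e] := fs_uniq hv hn.
have [_ _ _ _ z] := fs_coef hm; apply: z; lia.
Qed.

Lemma coef_fs_ssub (f v : L) lo hi a b : isL f ->
  (forall x, (x < lo) || (hi < x) -> lcoef f x = 0) -> fs_is v a b ->
  a <= lo -> hi <= b -> (a < lo) || (hi < b) -> fs_ssub f v.
Proof.
move=> hf z hv h1 h2 h3.
have key : forall a' b', fs_is f a' b' -> lo <= a' /\ b' <= hi.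
  move=> a' b' hfs; have [_ l ca cb _] := fs_coef hfs; split.
    by case: (lerP lo a') => // h; move: ca; rewrite z ?eqxx // h.
  by case: (lerP b' hi) => // h; move: cb; rewrite z ?eqxx // h orbT.
split.
  move=> j [a' [b' [hfs r]]]; have [k1 k2] := key _ _ hfs.
  by exists a, b; split => //; lia.
case/orP: h3 => h.
  exists a; split; first by have [_ l _ _ _] := fs_coef hv; exists a, b; split => //; lia.
  by move=> [a' [b' [hfs r]]]; have [k1 k2] := key _ _ hfs; lia.
exists b; split; first by have [_ l _ _ _] := fs_coef hv; exists a, b; split => //; lia.
by move=> [a' [b' [hfs r]]]; have [k1 k2] := key _ _ hfs; lia.
Qed.

Lemma coef_deg_lt (f v : L) hi a b : isL f ->
  (forall x, hi < x -> lcoef f x = 0) -> fs_is v a b -> hi < b -> deg_lt f v.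
Proof.
move=> hf z hv h; exists b; split; first by exists a.
have [->|nz] := eqVneq f 0; first by left.
right; have [a' [b' hfs]] := nz_fs hf nz; exists b'; split; first by exists a'.
have [_ _ _ cb _] := fs_coef hfs.
by case: (lerP b' hi) => // h'; [lia | move: cb; rewrite z ?eqxx].
Qed.

Lemma fs_ssub_mono (u v w : L) a b a2 b2 : fs_ssub u v -> fs_is v a b -> fs_is w a2 b2 ->
  a2 <= a -> b <= b2 -> fs_ssub u w.
Proof.
move=> [sub [j0 [v0 u0]]] hv hw h1 h2.
have conv : forall j, in_fs v j -> in_fs w j.
  move=> j [a' [b' [h r]]]; have [e1 e2] := fs_uniq hv h.
  by exists a2, b2; split => //; lia.
split; first by move=> j /sub /conv.
by exists j0; split => //; apply: conv.
Qed.

End Laur.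


Section Red.
Variable C : numClosedFieldType.
Local Notation L := (LF C).
Variables (k s : nat) (P : 'I_k -> 'I_k -> L) (n : 'I_k -> int).
Hypothesis hsk : (s < k)%N.
Hypothesis hPL : forall i j, isL (P i j).
Hypothesis hn0 : forall d : 'I_k, (d <= s)%N -> 0 <= n d.
Hypothesis hmono : forall d j : 'I_k, (d <= j)%N -> (j <= s)%N -> n d <= n j.
Hypothesis hdtop : forall d : 'I_k, (d <= s)%N -> lcoef (P d d) (n d) != 0.
Hypothesis hdbot : forall d : 'I_k, (d <= s)%N -> lcoef (P d d) (- n d) != 0.
Hypothesis hub : forall d j : 'I_k, (d <= s)%N -> (j <= s)%N ->
  forall x, n j < x -> lcoef (P d j) x = 0.
Hypothesis hubs : forall d j : 'I_k, (d < j)%N -> (j <= s)%N ->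
  forall x, n d <= x -> lcoef (P d j) x = 0.
Hypothesis hlb : forall d j : 'I_k, (d <= s)%N -> (j <= s)%N ->
  forall x, x < - n j -> lcoef (P d j) x = 0.
Hypothesis hlbs : forall d j : 'I_k, (j < d)%N -> (d <= s)%N ->
  forall x, x <= - n j -> lcoef (P d j) x = 0.

Definition VL (v : 'I_k -> L) := forall j, isL (v j).
Definition comb (v u : 'I_k -> L) j := v j - \sum_(l < k | (l <= s)%N) u l * P l j.
Definition Rr (v w : 'I_k -> L) :=
  exists u : 'I_k -> L, (forall l, isL (u l)) /\ forall j, w j = comb v u j.

Definition ub (f : L) h := forall x, h < x -> lcoef f x = 0.
Definition lb (f : L) h := forall x, x < h -> lcoef f x = 0.

Lemma R_refl v : Rr v v.
Proof.
exists (fun _ => 0); split => [l|j]; first exact: isL0.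
by rewrite /comb big1 ?subr0 // => l _; rewrite mul0r.
Qed.

Lemma R_trans u v w : Rr u v -> Rr v w -> Rr u w.
Proof.
move=> [a [ha ea]] [b [hb eb]]; exists (fun l => a l + b l); split.
  by move=> l; apply: isLD.
move=> j; rewrite eb /comb ea /comb.
under [X in _ = _ - X]eq_bigr => l _ do rewrite mulrDl.
by rewrite big_split /= opprD addrA.
Qed.

Lemma VL_comb v u : VL v -> (forall l, isL (u l)) -> VL (comb v u).
Proof.
move=> hv hu j; apply: isLB => //; apply: isL_sum => l _; exact: isLM.
Qed.

Lemma R_VL v w : VL v -> Rr v w -> VL w.
Proof. by move=> hv [u [hu e]] j; rewrite e; apply: VL_comb. Qed.

Lemma R_step v (m : 'I_k) c e : (m <= s)%N ->
  Rr v (fun j => v j - mono c e * P m j).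
Proof.
move=> ms; exists (fun l => if l == m then mono c e else 0); split.
  by move=> l; case: ifP => _; [exact: isL_mono | exact: isL0].
move=> j; rewrite /comb (bigD1 m) //= eqxx big1 ?addr0 //.
by move=> l /andP [_ /negbTE ->]; rewrite mul0r.
Qed.

Lemma step_coef v (m : 'I_k) c e j x : VL v ->
  lcoef (v j - mono c e * P m j) x = lcoef (v j) x - c * lcoef (P m j) (x - e).
Proof.
move=> hv; rewrite lcoefB ?lcoef_monoM //; apply: isLM => //; exact: isL_mono.
Qed.

Lemma top_inner (t : nat) (c : nat) : forall v, VL v ->
  (forall j : 'I_k, (j <= s)%N -> ub (v j) (n j + t%:Z + 1)) ->
  (forall j : 'I_k, (j <= s)%N -> (c <= j)%N -> lcoef (v j) (n j + t%:Z + 1) = 0) ->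
  exists w, Rr v w /\ forall j : 'I_k, (j <= s)%N -> ub (w j) (n j + t%:Z).
Proof.
elim: c => [|c IH] v hv h1 h2.
  exists v; split; first exact: R_refl.
  move=> j js x hx; case: (lerP x (n j + t%:Z + 1)) => h.
    have -> : x = n j + t%:Z + 1 by lia.
    exact: h2.
  exact: h1.
case: (leqP c s) => cs; last first.
  apply: IH => // j js cj; exfalso; lia.
have ck : (c < k)%N by lia.
pose m := Ordinal ck.
pose g := lcoef (v m) (n m + t%:Z + 1) / lcoef (P m m) (n m).
pose v1 := fun j => v j - mono g (t%:Z + 1) * P m j.
have R1 : Rr v v1 by apply: R_step.
have hv1 : VL v1 by apply: R_VL R1.
have [w [R2 hw]] : exists w, Rr v1 w /\ forall j : 'I_k, (j <= s)%N -> ub (w j) (n j + t%:Z).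
  apply: IH => //.
    move=> j js x hx; rewrite /v1 step_coef // (h1 j js x hx) (@hub m j cs js) ?mulr0 ?subr0 //.
    lia.
  move=> j js cj; rewrite /v1 step_coef //.
  have [ejm | nejm] := eqVneq j m.
    rewrite ejm /g.
    have -> : n m + t%:Z + 1 - (t%:Z + 1) = n m by lia.
    by rewrite divfK ?subrr // hdtop.
  have mj : (m < j)%N.
    rewrite /= ltn_neqAle cj andbT; apply: contraNneq nejm => e.
    by apply/eqP; apply: val_inj; rewrite /= e.
  rewrite (h2 j js mj).
  rewrite (hubs mj js) ?mulr0 ?subr0 //.
  have := hmono (ltnW mj) js; lia.
by exists w; split => //; apply: R_trans R1 R2.
Qed.

Lemma top_all (t : nat) : forall v, VL v ->
  (forall j : 'I_k, (j <= s)%N -> ub (v j) (n j + t%:Z)) ->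
  exists w, Rr v w /\ forall j : 'I_k, (j <= s)%N -> ub (w j) (n j).
Proof.
elim: t => [|t IH] v hv h.
  exists v; split; first exact: R_refl.
  by move=> j js x hx; apply: h => //; lia.
have [w1 [R1 hw1]] := @top_inner t s.+1 v hv
  (fun j js x hx => h j js x ltac:(lia)) (fun j js sj => ltac:(exfalso; lia)).
have [w [R2 hw]] := IH w1 (R_VL hv R1) hw1.
by exists w; split => //; apply: R_trans R1 R2.
Qed.


Lemma bot_inner (t : nat) (r : nat) : forall v, VL v ->
  (forall j : 'I_k, (j <= s)%N -> ub (v j) (n j)) ->
  (forall j : 'I_k, (j <= s)%N -> lb (v j) (- n j - t%:Z)) ->
  (forall j : 'I_k, (j <= s)%N -> (j + r <= s)%N -> lcoef (v j) (- n j - t%:Z) = 0) ->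
  exists w, Rr v w /\ forall j : 'I_k, (j <= s)%N ->
    ub (w j) (n j) /\ lb (w j) (- n j - t%:Z + 1).
Proof.
elim: r => [|r IH] v hv h0 h1 h2.
  exists v; split; first exact: R_refl.
  move=> j js; split; first exact: h0.
  move=> x hx; case: (lerP (- n j - t%:Z) x) => h.
    have -> : x = - n j - t%:Z by lia.
    by apply: h2 => //; rewrite addn0.
  exact: h1.
case: (leqP r s) => rs; last first.
  apply: IH => // j js cj; exfalso; lia.
have ck : (s - r < k)%N by lia.
pose m := Ordinal ck.
have ms : (m <= s)%N by rewrite /= leq_subr.
pose g := lcoef (v m) (- n m - t%:Z) / lcoef (P m m) (- n m).
pose v1 := fun j => v j - mono g (- t%:Z) * P m j.
have R1 : Rr v v1 by apply: R_step.
have hv1 : VL v1 by apply: R_VL R1.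
have [w [R2 hw]] : exists w, Rr v1 w /\ forall j : 'I_k, (j <= s)%N ->
    ub (w j) (n j) /\ lb (w j) (- n j - t%:Z + 1).
  apply: IH => //.
  - move=> j js x hx; rewrite /v1 step_coef // (h0 j js x hx) (@hub m j ms js) ?mulr0 ?subr0 //.
    lia.
  - move=> j js x hx; rewrite /v1 step_coef // (h1 j js x hx) (@hlb m j ms js) ?mulr0 ?subr0 //.
    lia.
  move=> j js cj; rewrite /v1 step_coef //.
  have [ejm | nejm] := eqVneq j m.
    rewrite ejm /g.
    have -> : - n m - t%:Z - - t%:Z = - n m by lia.
    by rewrite divfK ?subrr // hdbot.
  have jm : (j < m)%N.
    rewrite ltn_neqAle; apply/andP; split; last by rewrite /=; lia.
    apply: contraNneq nejm => e; by apply/eqP; apply: val_inj.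
  have jr : (j + r.+1 <= s)%N by move: jm; rewrite /=; lia.
  rewrite (h2 j js jr).
  rewrite (@hlbs m j jm ms) ?mulr0 ?subr0 //.
  lia.
by exists w; split => //; apply: R_trans R1 R2.
Qed.

Lemma bot_all (t : nat) : forall v, VL v ->
  (forall j : 'I_k, (j <= s)%N -> ub (v j) (n j)) ->
  (forall j : 'I_k, (j <= s)%N -> lb (v j) (- n j + 1 - t%:Z)) ->
  exists w, Rr v w /\ forall j : 'I_k, (j <= s)%N ->
    ub (w j) (n j) /\ lb (w j) (- n j + 1).
Proof.
elim: t => [|t IH] v hv h0 h1.
  exists v; split; first exact: R_refl.
  by move=> j js; split; [exact: h0 | move=> x hx; apply: h1 => //; lia].
have [w1 [R1 hw1]] := @bot_inner t s.+1 v hv h0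
  (fun j js x hx => h1 j js x ltac:(lia)) (fun j js sj => ltac:(exfalso; lia)).
have [w [R2 hw]] := IH w1 (R_VL hv R1) (fun j js => (hw1 j js).1)
  (fun j js x hx => (hw1 j js).2 x ltac:(lia)).
by exists w; split => //; apply: R_trans R1 R2.
Qed.

Lemma vec_bound v : VL v -> exists N : nat, forall (j : 'I_k) x,
  (N%:Z < x) || (x < - N%:Z) -> lcoef (v j) x = 0.
Proof.
move=> hv.
suff H : forall m, (m <= k)%N -> exists N : nat, forall (j : 'I_k) x, (j < m)%N ->
  (N%:Z < x) || (x < - N%:Z) -> lcoef (v j) x = 0.
  by have [N HN] := H k (leqnn k); exists N => j x; apply: HN.
elim=> [|m IH] mk.
  by exists 0%N => j x.
have [N1 H1] := IH (ltnW mk).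
have [N2 H2] := lcoef_bound (hv (Ordinal mk)).
exists (maxn N1 N2) => j x jm hx.
have [ej | nej] := eqVneq (nat_of_ord j) m.
  have -> : j = Ordinal mk by apply: val_inj.
  apply: H2; move: hx; rewrite /=.
  have : (N2 <= maxn N1 N2)%N by apply: leq_maxr.
  by move=> le /orP [] h; apply/orP; [left | right]; lia.
apply: H1; first by lia.
have : (N1 <= maxn N1 N2)%N by apply: leq_maxl.
by move=> le; case/orP: hx => h; apply/orP; [left | right]; lia.
Qed.

Lemma reduce v : VL v -> exists w, Rr v w /\ forall j : 'I_k, (j <= s)%N ->
  ub (w j) (n j) /\ lb (w j) (- n j + 1).
Proof.
move=> hv; have [N HN] := vec_bound hv.
have [w1 [R1 hw1]] : exists w, Rr v w /\ forall j : 'I_k, (j <= s)%N -> ub (w j) (n j).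
  apply: (@top_all N v hv) => j js x hx; apply: HN; apply/orP; left.
  have := hn0 js; lia.
have hv1 := R_VL hv R1.
have [N2 HN2] := vec_bound hv1.
have [w [R2 hw]] := @bot_all N2.+1 w1 hv1 hw1
  (fun j js x hx => HN2 j x ltac:(apply/orP; right; have := hn0 js; lia)).
by exists w; split => //; apply: R_trans R1 R2.
Qed.

End Red.


Section Mx.
Variable C : numClosedFieldType.
Local Notation L := (LF C).

Lemma sum_delta k (i : 'I_k) (F : 'I_k -> L) :
  \sum_(a < k) (if a == i then F a else 0) = F i.
Proof. by rewrite -big_mkcond big_pred1_eq. Qed.

Definition Umx k s (uu : 'I_k -> 'I_k -> L) : 'M[L]_k :=
  \matrix_(i, j) (if i == j then 1 else if (s < i)%N && (j <= s)%N then - uu i j else 0).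
Definition Usmx k s (uu : 'I_k -> 'I_k -> L) : 'M[L]_k :=
  \matrix_(i, j) (if i == j then 1 else if (s < j)%N && (i <= s)%N then - st (uu j i) else 0).

Lemma UQ_entry k s uu (Q : 'M[L]_k) i b : (Umx s uu *m Q) i b =
  if (s < i)%N then Q i b - \sum_(l < k | (l <= s)%N) uu i l * Q l b else Q i b.
Proof.
rewrite mxE; case: ifP => si.
  transitivity (\sum_a ((if a == i then Q a b else 0) +
                        (if (a <= s)%N then - (uu i a * Q a b) else 0))).
    apply: eq_bigr => a _; rewrite mxE eq_sym; case: eqP => [->|_].
      by rewrite leqNgt si /= mul1r addr0.
    by rewrite add0r si /=; case: ifP => _; [rewrite mulNr | rewrite mul0r].
  by rewrite big_split /= sum_delta -big_mkcond sumrN.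
transitivity (\sum_a (if a == i then Q a b else 0)); last exact: sum_delta.
apply: eq_bigr => a _; rewrite mxE eq_sym; case: eqP => [->|_]; first by rewrite mul1r.
by rewrite si /= mul0r.
Qed.

Lemma XU_entry k s uu (X : 'M[L]_k) i j : (X *m Usmx s uu) i j =
  if (s < j)%N then X i j - \sum_(b < k | (b <= s)%N) X i b * st (uu j b) else X i j.
Proof.
rewrite mxE; case: ifP => sj.
  transitivity (\sum_b ((if b == j then X i b else 0) +
                        (if (b <= s)%N then - (X i b * st (uu j b)) else 0))).
    apply: eq_bigr => b _; rewrite mxE; case: eqP => [->|_].
      by rewrite leqNgt sj /= mulr1 addr0.
    by rewrite add0r sj /=; case: ifP => _; [rewrite mulrN | rewrite mulr0].
  by rewrite big_split /= sum_delta -big_mkcond sumrN.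
transitivity (\sum_b (if b == j then X i b else 0)); last exact: sum_delta.
apply: eq_bigr => b _; rewrite mxE; case: eqP => [->|_]; first by rewrite mulr1.
by rewrite sj /= mulr0.
Qed.

End Mx.

Unset Implicit Arguments.

(* Indices are 0-based: the paper's diagonal entries 1..s are indices d < s,
   entries 1..s+1 are indices d <= s. *)
Theorem lemma4p2 (C : numClosedFieldType) (k s : nat) (Q : 'M[LF C]_k)
  (hQ : hermite Q)
  (h11 : forall i : 'I_k, nat_of_ord i = 0%N -> Q i i != 0)
  (hlen : forall i j : 'I_k, (i <= j)%N -> len_le (Q i i) (Q j j))
  (hs : (s < k)%N)
  (hdd : forall d : 'I_k, (d < s)%N -> diag_dom_at Q d) :
  exists U Ustar : 'M[LF C]_k,
    [/\ mxstar U Ustar, unimodular U,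
        (forall d : 'I_k, (d <= s)%N -> diag_dom_at (U *m Q *m Ustar) d) &
        (forall i j : 'I_k, (i <= s)%N -> (j <= s)%N -> (U *m Q *m Ustar) i j = Q i j)].
Proof.
have hQL : forall i j, isL (Q i j) by move=> i j; have [] := lstar_eq (hQ j i).
have hst : forall i j, Q i j = st (Q j i) by move=> i j; have [] := lstar_eq (hQ i j).
have k0 : (0 < k)%N by lia.
have fs_nz : forall (f : LF C) a b, fs_is f a b -> f != 0.
  move=> f a b h; have [_ _ ca _ _] := fs_coef h.
  by apply: contraNneq ca => ->; rewrite lcoef0.
have hfs : forall d, exists a b, fs_is (Q d d) a b.
  move=> d; case: (hlen (Ordinal k0) d (leq0n _)) => [e|[l [m [_ [a [b [h _]]] _]]]].
    by move: (h11 (Ordinal k0) erefl); rewrite e eqxx.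
  by exists a, b.
have hsym : forall d, exists b, fs_is (Q d d) (- b) b.
  move=> d; have [a [b h]] := hfs d; have [_ ab ca cb z] := fs_coef h.
  have hc : forall x, lcoef (Q d d) x = Num.conj (lcoef (Q d d) (- x)).
    by move=> x; rewrite {1}(hst d d) lcoef_st.
  have e1 : a <= - b.
    case: (lerP a (- b)) => // h'; exfalso.
    by move: cb; rewrite hc (z (- b)) ?conjC0 ?eqxx // h'.
  have e2 : - a <= b.
    case: (lerP (- a) b) => // h'; exfalso.
    by move: ca; rewrite hc (z (- a)) ?conjC0 ?eqxx // h' orbT.
  exists b; have -> : - b = a by lia.
  exact: h.
pose n := fun d => epsilon (inhabits 0) (fun b => fs_is (Q d d) (- b) b).
have hn : forall d, fs_is (Q d d) (- n d) (n d).
  by move=> d; exact: (epsilon_spec (inhabits 0) (fun b => fs_is (Q d d) (- b) b) (hsym d)).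
have hn0 : forall d : 'I_k, (d <= s)%N -> 0 <= n d.
  by move=> d _; have [_ ab _ _ _] := fs_coef (hn d); lia.
have hmono : forall d j : 'I_k, (d <= j)%N -> (j <= s)%N -> n d <= n j.
  move=> d j dj js.
  case: (hlen d j dj) => [e|[l [m [[a [b [h el]]] [a' [b' [h' em]]] lm]]]].
    by move: (fs_nz _ _ _ (hn d)); rewrite e eqxx.
  have [e1 e2] := fs_uniq (hn d) h; have [e3 e4] := fs_uniq (hn j) h'; lia.
have hdtop : forall d : 'I_k, (d <= s)%N -> lcoef (Q d d) (n d) != 0.
  by move=> d _; have [_ _ _ cb _] := fs_coef (hn d).
have hdbot : forall d : 'I_k, (d <= s)%N -> lcoef (Q d d) (- n d) != 0.
  by move=> d _; have [_ _ ca _ _] := fs_coef (hn d).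
have hubs : forall d j : 'I_k, (d < j)%N -> (j <= s)%N ->
    forall x, n d <= x -> lcoef (Q d j) x = 0.
  move=> d j dj js x hx; have ds : (d < s)%N by lia.
  have [_ h2] := hdd d ds; exact: (deg_lt_coef (h2 j dj) (hn d)).
have hlbs : forall d j : 'I_k, (j < d)%N -> (d <= s)%N ->
    forall x, x <= - n j -> lcoef (Q d j) x = 0.
  move=> d j jd ds x hx; have js : (j < s)%N by lia.
  rewrite (hst d j) lcoef_st // (deg_lt_coef ((hdd j js).2 d jd) (hn j)) ?conjC0 //.
  lia.
have hub : forall d j : 'I_k, (d <= s)%N -> (j <= s)%N ->
    forall x, n j < x -> lcoef (Q d j) x = 0.
  move=> d j ds js x hx; case: (ltngtP d j) => h.
  - apply: hubs => //; have := hmono d j (ltnW h) js; lia.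
  - have jls : (j < s)%N by lia.
    have [hh _] := (hdd j jls).1 d ltac:(by rewrite -val_eqE /= gtn_eqF).
    apply: (fs_ssub_coef (hQL d j) hh (hn j)); apply/orP; right; done.
  - have ej : d = j by apply: val_inj.
    subst j; have [_ _ _ _ z] := fs_coef (hn d); apply: z; apply/orP; right; done.
have hlb : forall d j : 'I_k, (d <= s)%N -> (j <= s)%N ->
    forall x, x < - n j -> lcoef (Q d j) x = 0.
  move=> d j ds js x hx; case: (ltngtP d j) => h.
  - have dls : (d < s)%N by lia.
    have [_ hh] := (hdd d dls).1 j ltac:(by rewrite -val_eqE /= gtn_eqF).
    apply: (fs_ssub_coef (hQL d j) hh (hn d)); apply/orP; left.
    have := hmono d j (ltnW h) js; lia.
  - apply: hlbs => //; lia.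
  - have ej : d = j by apply: val_inj.
    subst j; have [_ _ _ _ z] := fs_coef (hn d); apply: z; apply/orP; left; done.
have red := reduce hs hQL hn0 hmono hdtop hdbot hub hubs hlb hlbs.
pose good := fun (i : 'I_k) (u : 'I_k -> LF C) => (forall l, isL (u l)) /\
  forall j : 'I_k, (j <= s)%N -> ub (comb s Q (fun j => Q i j) u j) (n j) /\
    lb (comb s Q (fun j => Q i j) u j) (- n j + 1).
have hgood : forall i, exists u, good i u.
  move=> i; have [w [[u [hu ew]] hw]] := red (fun j => Q i j) (fun j => hQL i j).
  by exists u; split => // j js; rewrite -ew; apply: hw.
pose uu := fun i => epsilon (inhabits (fun _ : 'I_k => 0 : LF C)) (good i).
have huu : forall i, good i (uu i).
  by move=> i; exact: (epsilon_spec (inhabits (fun _ : 'I_k => 0 : LF C)) (good i) (hgood i)).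
have huL : forall i l, isL (uu i l) by move=> i l; exact: (huu i).1.
exists (Umx s uu), (Usmx s uu).
pose M := Umx s uu *m Q *m Usmx s uu.
have hMq : forall i j : 'I_k, (i <= s)%N -> (j <= s)%N -> M i j = Q i j.
  move=> i j ils js; rewrite /M XU_entry UQ_entry.
  by rewrite ltnNge js /= ltnNge ils.
have hMid : forall i d : 'I_k, (s < i)%N -> (d <= s)%N ->
    M i d = comb s Q (fun j => Q i j) (uu i) d.
  by move=> i d si ds; rewrite /M XU_entry UQ_entry ltnNge ds /= si.
have hMdi : forall i d : 'I_k, (s < i)%N -> (d <= s)%N -> M d i = st (M i d).
  move=> i d si ds; rewrite (hMid i d si ds) /comb /M XU_entry UQ_entry si ltnNge ds /=.
  rewrite stB //; last by apply: isL_sum => l _; apply: isLM.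
  rewrite st_sum; last by move=> l _; apply: isLM.
  rewrite -hst; congr (_ - _); apply: eq_bigr => l ls.
  by rewrite UQ_entry ltnNge ds /= stM // -hst mulrC.
have hML : forall i d : 'I_k, (s < i)%N -> (d <= s)%N -> isL (M i d).
  move=> i d si ds; rewrite hMid //; apply: isLB => //; apply: isL_sum => l _.
  exact: isLM.
split.
- move=> i j; rewrite !mxE eq_sym; case: eqP => _.
    by have := lstar_st (@isL1 C); rewrite st1.
  case: ifP => _.
    by have := lstar_st (isLN (huL j i)); rewrite stN.
  by have := lstar_st (@isL0 C); rewrite st0.
- exists 1, 0; split; first exact: oner_neq0.
  rewrite det_trig.
    rewrite big1; last by move=> i _; rewrite mxE eqxx.
    by rewrite /toLF rmorph1 expr0z mulr1.
  apply/is_trig_mxP => i j ij; rewrite mxE.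
  have -> : (i == j) = false by rewrite -val_eqE /= ltn_eqF.
  case: ifP => // /andP [si js]; lia.
- move=> d ds; rewrite -/M; split.
  + move=> i nid; case: (leqP i s) => ils.
      rewrite !hMq //; case: (ltnP d s) => dls.
        exact: ((hdd d dls).1 i nid).
      have ids : (i < s)%N.
        rewrite ltn_neqAle ils andbT; apply: contra nid => /eqP e.
        by rewrite -val_eqE /= e eqn_leq ds dls.
      have [a1 a2] := (hdd i ids).1 d ltac:(by rewrite eq_sym).
      have mi := hmono i d ltac:(lia) ds.
      split.
        by apply: (fs_ssub_mono a2 (hn i) (hn d)); lia.
      by apply: (fs_ssub_mono a1 (hn i) (hn d)); lia.
    have [_ hg] := huu i; have [hu hl] := hg d ds.
    rewrite (hMq d d ds ds); split.
      apply: (@coef_fs_ssub _ _ _ (- n d + 1) (n d) (- n d) (n d)) => //.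
      * exact: hML.
      * move=> x /orP [] hx; rewrite hMid //; [exact: hl | exact: hu].
      * lia.
      * by apply/orP; left; lia.
    apply: (@coef_fs_ssub _ _ _ (- n d) (n d - 1) (- n d) (n d)) => //.
    * rewrite hMdi //; apply: isL_st; exact: hML.
    * move=> x /orP [] hx; rewrite hMdi // lcoef_st; try exact: hML.
        by rewrite hMid // hu ?conjC0 //; lia.
      by rewrite hMid // hl ?conjC0 //; lia.
    * lia.
    * by apply/orP; right; lia.
  + move=> i di; case: (leqP i s) => ils.
      have dls : (d < s)%N by lia.
      by rewrite !hMq //; apply: ((hdd d dls).2 i di).
    have [_ hg] := huu i; have [hu hl] := hg d ds.
    rewrite (hMq d d ds ds).
    apply: (@coef_deg_lt _ _ _ (n d - 1) (- n d) (n d)) => //.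
    * rewrite hMdi //; apply: isL_st; exact: hML.
    * move=> x hx; rewrite hMdi // lcoef_st; last exact: hML.
      by rewrite hMid // hl ?conjC0 //; lia.
    * lia.
- exact: hMq.
Qed.
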